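(* Let $X \subseteq {}^\omega 2$ and let $D \subseteq \mathbb{S}$ satisfy: (a) $D$ is dense: for every $p\in\mathbb S$ there is $q\le p$ with $q\in D$; (b) $D$ is translation-invariant: for every $p\in\mathbb S$ and $t\in{}^\omega 2$, $p\in D$ iff $p+t\in D$; (c) for every cardinal $\mu<\mathfrak c$ and every family $\{p_\alpha:\alpha<\mu\}\subseteq D$ we have $X\not\subseteq\bigcup_{\alpha<\mu}[p_\alpha]$. Then there is $Y\in s_0$ with $X+Y={}^\omega 2$; i.e., $X$ is not $s_0$-shiftable.
   Context: ${}^\omega 2$ is the Cantor space with bitwise addition modulo $2$, denoted $+$; $\mathfrak c=2^{\aleph_0}$. $\mathbb S$ (Sacks forcing) is the set of perfect subtrees of ${}^{<\omega}2$, ordered by inclusion ($q\le p$ iff $q\subseteq p$); $[p]$ denotes the set of branches of $p$. For $p\in\mathbb S$ and $t\in{}^\omega 2$, $p+t=\{\sigma+t\restriction|\sigma| : \sigma\in p\}$, so $[p+t]=[p]+t$. A set $Y \subseteq {}^\omega 2$ is Marczewski null ($Y \in s_0$) if for every $p\in\mathbb S$ there is $q\le p$ with $[q]\cap Y=\emptyset$. A set $X$ is $s_0$-shiftable if $X+Y\neq{}^\omega 2$ for every $Y\in s_0$. *)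

(* Defs.v *)
From mathcomp Require Import all_boot.
Set Implicit Arguments. Unset Strict Implicit. Unset Printing Implicit Defensive.

Definition cantor := nat -> bool.
Definition cadd (x y : cantor) : cantor := fun n => xorb (x n) (y n).

Definition tree := seq bool -> Prop.

Definition initseg (s t : seq bool) : Prop := exists u, t = s ++ u.

Definition perfect (p : tree) : Prop :=
  p [::] /\
  (forall s t, initseg s t -> p t -> p s) /\
  (forall s, p s -> exists t, initseg s t /\ p (rcons t false) /\ p (rcons t true)).

Definition tle (q p : tree) : Prop := forall s, q s -> p s.

Definition restr (x : cantor) (n : nat) : seq bool := mkseq x n.

Definition branch (p : tree) (x : cantor) : Prop := forall n, p (restr x n).

Definition seqadd (s : seq bool) (t : cantor) : seq bool :=
  mkseq (fun i => xorb (nth false s i) (t i)) (size s).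

Definition ttrans (p : tree) (t : cantor) : tree :=
  fun s => exists sigma, p sigma /\ s = seqadd sigma t.

Definition s0 (Y : cantor -> Prop) : Prop :=
  forall p, perfect p -> exists q, perfect q /\ tle q p /\ forall y, branch q y -> ~ Y y.

Definition card_lt (I J : Type) : Prop :=
  (exists f : I -> J, injective f) /\ ~ (exists g : J -> I, injective g).

(* Main.v *)
Require Import Defs.
From mathcomp Require Import all_boot.
From mathcomp Require Import boolp wochoice.
Set Implicit Arguments. Unset Strict Implicit. Unset Printing Implicit Defensive.

Lemma initsegE (s t : seq bool) : initseg s t <-> take (size s) t = s.
Proof.
split=> [[u ->]|<-]; first by rewrite take_size_cat.
by exists (drop (size s) t); rewrite cat_take_drop.
Qed.

Lemma initseg_refl s : initseg s s.
Proof. by exists [::]; rewrite cats0. Qed.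

Lemma initseg_trans a b c : initseg a b -> initseg b c -> initseg a c.
Proof. by move=> [u ->] [v ->]; exists (u ++ v); rewrite catA. Qed.

Lemma initseg_rcons s (b : bool) : initseg s (rcons s b).
Proof. by exists [:: b]; rewrite cats1. Qed.

Lemma initseg_size a b : initseg a b -> size a <= size b.
Proof. by move=> [u ->]; rewrite size_cat leq_addr. Qed.

Lemma prefix_le a b c : initseg a c -> initseg b c -> size a <= size b -> initseg a b.
Proof.
move=> /initsegE ha /initsegE hb hs; apply/initsegE.
by rewrite -hb take_takel // ha.
Qed.

Lemma prefix_eq a b : initseg a b -> size b <= size a -> a = b.
Proof.
move=> [u ->]; rewrite size_cat -{2}(addn0 (size a)) leq_add2l leqn0 => /nilP ->.
by rewrite cats0.
Qed.

Lemma comparable a b c : initseg a c -> initseg b c -> initseg a b \/ initseg b a.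
Proof.
move=> ha hb; case: (leqP (size a) (size b)) => h.
  by left; apply: prefix_le ha hb h.
by right; apply: prefix_le hb ha (ltnW h).
Qed.

Definition node (sp : seq bool -> seq bool) (u : seq bool) :=
  foldl (fun s b => rcons (sp s) b) [::] u.

Lemma node_rcons sp u b : node sp (rcons u b) = rcons (sp (node sp u)) b.
Proof. by rewrite /node foldl_rcons. Qed.

Definition splitprop (p : tree) (sp : seq bool -> seq bool) :=
  forall s, p s -> initseg s (sp s) /\ p (rcons (sp s) false) /\ p (rcons (sp s) true).

Lemma node_in p sp : p [::] -> splitprop p sp -> forall u, p (node sp u).
Proof.
move=> h0 hs; elim/last_ind => [//|u b IH].
rewrite node_rcons; have [_ [hf ht]] := hs _ IH; by case: b.
Qed.

Lemma node_mono p sp : p [::] -> splitprop p sp ->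
  forall u v, initseg u v -> initseg (node sp u) (node sp v).
Proof.
move=> h0 hs u v [w ->]; elim/last_ind: w => [|w b IH].
  by rewrite cats0; apply: initseg_refl.
rewrite -rcons_cat node_rcons; apply: (initseg_trans IH).
apply: initseg_trans (initseg_rcons _ _).
by have [] := hs _ (node_in h0 hs (u ++ w)).
Qed.

Lemma node_incomp p sp : p [::] -> splitprop p sp ->
  forall u v, size u = size v ->
  (initseg (node sp u) (node sp v) \/ initseg (node sp v) (node sp u)) -> u = v.
Proof.
move=> h0 hs; elim/last_ind => [|u a IH] v.
  by case: v.
case/lastP: v => [|v b]; first by rewrite size_rcons.
rewrite !size_rcons => /eqP; rewrite eqSS => /eqP hsz.
rewrite !node_rcons => hc.
have hu0 : initseg (node sp u) (rcons (sp (node sp u)) a).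
  apply: initseg_trans (initseg_rcons _ _).
  by have [] := hs _ (node_in h0 hs u).
have hv0 : initseg (node sp v) (rcons (sp (node sp v)) b).
  apply: initseg_trans (initseg_rcons _ _).
  by have [] := hs _ (node_in h0 hs v).
have huv : u = v.
  apply: IH hsz _; case: hc => hc.
    exact: comparable (initseg_trans hu0 hc) hv0.
  exact: comparable hu0 (initseg_trans hv0 hc).
subst v; have : rcons (sp (node sp u)) a = rcons (sp (node sp u)) b.
  case: hc => hc; [apply: prefix_eq hc _ | apply: esym; apply: prefix_eq hc _]; by rewrite !size_rcons.
by move/rcons_inj => [->].
Qed.

Lemma restr_mono (x : cantor) m n : m <= n -> initseg (restr x m) (restr x n).
Proof.
move=> /subnKC <-; elim: (n - m) => [|k IH]; first by rewrite addn0; apply: initseg_refl.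
rewrite addnS /restr mkseqS; exact: initseg_trans IH (initseg_rcons _ _).
Qed.

Lemma restr_ext (x x' : cantor) n : (forall i, i < n -> x i = x' i) -> restr x n = restr x' n.
Proof.
elim: n => [//|n IH] h; rewrite /restr !mkseqS; congr rcons; last by apply: h.
by apply: IH => i hi; apply: h; apply: ltnW.
Qed.

Definition Tc (sp : seq bool -> seq bool) (c : cantor) : tree :=
  fun s => exists (x : cantor) n, (forall i, x i.*2 = c i) /\ initseg s (node sp (restr x n)).

Lemma Tc_perfect p sp c : perfect p -> splitprop p sp -> perfect (Tc sp c) /\ tle (Tc sp c) p.
Proof.
move=> [h0 [hcl hspl]] hs; split; last first.
  move=> s [x [n [_ hi]]]; apply: hcl hi _; exact: node_in.
split; first by exists (fun n => c n./2), 0; split; [move=> i; rewrite doubleK | exists [::]].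
split.
  move=> s t hst [x [n [hx hi]]]; exists x, n; split=> //; exact: initseg_trans hi.
move=> s [x [n [hx hi]]].
pose m := n.*2.+1.
have hnm : n <= m by rewrite /m -addnn ltnW // ltnS leq_addr.
set t := sp (node sp (restr x m)).
pose x' := fun i => if i == m then ~~ x m else x i.
have hx' : forall i, x' i.*2 = c i.
  move=> i; rewrite /x'; case: eqP => [h|_]; last by apply: hx.
  by move: (congr1 odd h); rewrite odd_double /= odd_double.
have hr : restr x' m = restr x m.
  apply: restr_ext => i him; rewrite /x'; case: eqP => // h; by rewrite h ltnn in him.
have hA : Tc sp c (rcons t (x m)).
  exists x, m.+1; split=> //; rewrite /restr mkseqS node_rcons; exact: initseg_refl.
have hB : Tc sp c (rcons t (~~ x m)).
  exists x', m.+1; split=> //; rewrite /restr mkseqS node_rcons.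
  rewrite -/(restr x' m) hr /x' eqxx; exact: initseg_refl.
exists t; split.
  apply: (initseg_trans hi); apply: initseg_trans (node_mono h0 hs (restr_mono x hnm)) _.
  by have [] := hs _ (node_in h0 hs (restr x m)).
by case: (x m) hA hB => /= ha hb; split.
Qed.

Lemma Tc_disj p sp (c c' : cantor) k y : perfect p -> splitprop p sp -> c k <> c' k ->
  branch (Tc sp c) y -> branch (Tc sp c') y -> False.
Proof.
move=> [h0 _] hs hck hy hy'.
pose K := k.*2.+1.
pose M := \max_(t : K.-tuple bool) size (node sp t).
have hM : forall x : cantor, size (node sp (restr x K)) <= M.
  move=> x.
  have := (@leq_bigmax _ (fun t : K.-tuple bool => size (node sp t))
     (@Tuple K bool (restr x K) (introT eqP (size_mkseq x K)))).
  by [].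
have key : forall d : cantor, branch (Tc sp d) y ->
    exists x : cantor, (forall i, x i.*2 = d i) /\ initseg (node sp (restr x K)) (restr y M).
  move=> d hd; have [x [n [hx hi]]] := hd M; exists x; split=> //.
  pose N := maxn n K.
  have h1 := node_mono h0 hs (restr_mono x (leq_maxl n K)).
  have h2 := node_mono h0 hs (restr_mono x (leq_maxr n K)).
  apply: prefix_le h2 (initseg_trans hi h1) _.
  by rewrite /restr size_mkseq -/(restr x K).
have [x [hx hix]] := key c hy; have [x' [hx' hix']] := key c' hy'.
have := node_incomp h0 hs (u:=restr x K) (v:=restr x' K).
rewrite /restr !size_mkseq => /(_ erefl (comparable hix hix')) he.
apply: hck; rewrite -hx -hx'.
have := congr1 (fun s => nth false s k.*2) he.
by rewrite /= !nth_mkseq.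
Qed.

Definition Small (A : cantor -> Prop) :=
  ~ exists g : cantor -> cantor, injective g /\ forall c, A (g c).

Lemma avoid_small p (A : cantor -> Prop) : perfect p -> Small A ->
  exists q, perfect q /\ tle q p /\ forall y, branch q y -> ~ A y.
Proof.
move=> hp hA.
have [sp hs] : exists sp, splitprop p sp.
  have [_ [_ hspl]] := hp.
  have H : forall s, exists t, p s -> initseg s t /\ p (rcons t false) /\ p (rcons t true).
    move=> s; case: (pselect (p s)) => ps; last by exists s.
    by have [t ht] := hspl s ps; exists t.
  exists (fun s => proj1_sig (cid (H s))).
  by move=> s ps; have := proj2_sig (cid (H s)); apply.
apply: contrapT => hno.
have H : forall c : cantor, exists y, branch (Tc sp c) y /\ A y.
  move=> c; have [hq hle] := Tc_perfect c hp hs.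
  apply: contrapT => hn; apply: hno; exists (Tc sp c); do 2!split=> //.
  by move=> y hy hAy; apply: hn; exists y.
pose g := fun c => proj1_sig (cid (H c)).
have hg : forall c, branch (Tc sp c) (g c) /\ A (g c).
  by move=> c; exact: (proj2_sig (cid (H c))).
apply: hA; exists g; split; last by move=> c; case: (hg c).
move=> c c' he; apply: funext => k; apply: contrapT => hk.
apply: (Tc_disj hp hs hk (proj1 (hg c))); rewrite he; exact: proj1 (hg c').
Qed.

Lemma wo_exists : exists lt : cantor -> cantor -> bool,
  well_founded (fun a b => lt a b) /\ (forall a b, lt a b \/ a = b \/ lt b a) /\
  (forall z, Small (fun w => lt w z)).
Proof.
have [R0 wo] := well_ordering_principle cantor.
have wc : wo_chain R0 predT by move=> A _; apply: wo.
have tot := wo_chainW wc.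
have anti := wo_chain_antisymmetric wc.
have minP : forall A : cantor -> Prop, (exists x, A x) ->
    exists z, A z /\ forall x, A x -> R0 z x.
  move=> A [x Ax].
  have [|z [[/asboolP Az lb] _]] := wo [pred x | `[< A x >]].
    by exists x; apply/asboolP.
  by exists z; split=> // y Ay; apply: lb; apply/asboolP.
pose lt0 := fun a b => R0 a b && (a != b).
have wf0 : well_founded (fun a b => lt0 a b).
  move=> a; apply: contrapT => na.
  have [z [nz lb]] := minP (fun x => ~ Acc (fun a b => lt0 a b) x) (ex_intro _ a na).
  apply: nz; constructor => y /andP [hyz /eqP nyz].
  apply: contrapT => ny; apply: nyz; apply: anti => //; by rewrite hyz lb.
have hg : exists g : cantor -> cantor, injective g /\
    forall z, Small (fun w => lt0 (g w) (g z)).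
  case: (pselect (exists m, exists g : cantor -> cantor, injective g /\ forall c, lt0 (g c) m)).
    move=> hB; have [m [[g [gi gm]] lb]] := minP _ hB.
    exists g; split=> // z [h [hi hh]].
    have : R0 m (g z).
      apply: lb; exists (fun c => g (h c)); split=> //.
      by move=> c1 c2 /gi /hi.
    move: (gm z) => /andP [h1 /eqP h2] h3; apply: h2; apply: anti => //; by rewrite h1 h3.
  move=> nB; exists id; split=> // z [h [hi hh]]; apply: nB; exists z, h; split=> //.
have [g [gi gS]] := hg.
exists (fun a b => lt0 (g a) (g b)); split; [|split=> //].
  have H : forall b, Acc (fun a b => lt0 a b) b -> forall a, g a = b ->
      Acc (fun a b => lt0 (g a) (g b)) a.
    move=> b; elim=> b' _ IH a hab; constructor => a' ha'.
    by apply: (IH (g a')) => //; rewrite -hab.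
  by move=> a; apply: (H (g a)).
move=> a b; case: (pselect (a = b)) => [->|nab]; first by right; left.
have ngab : g a != g b by apply/eqP => /gi.
have := tot (g a) (g b) isT isT; case/orP => h.
  by left; rewrite /lt0 h ngab.
by right; right; rewrite /lt0 h eq_sym ngab.
Qed.

Lemma branch_trans q (x v : cantor) : branch q (cadd x v) -> branch (ttrans q v) x.
Proof.
move=> hb n; exists (restr (cadd x v) n); split=> //.
rewrite /seqadd /restr size_mkseq.
apply: (restr_ext (x := x) (x' := fun i => xorb (nth false (mkseq (cadd x v) n) i) (v i))).
move=> i hi; rewrite nth_mkseq // /cadd; by case: (x i); case: (v i).
Qed.

Lemma small_single (y : cantor) : Small (fun y' => y' = y).
Proof.
move=> [g [gi gy]].
have := gi (fun _ => false) (fun _ => true); rewrite !gy => /(_ erefl) /(congr1 (fun f => f 0)).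
by [].
Qed.

Theorem lemma2p1 (X : cantor -> Prop) (D : tree -> Prop)
  (HDS : forall p, D p -> perfect p)
  (Hdense : forall p, perfect p -> exists q, perfect q /\ tle q p /\ D q)
  (Hinv : forall p (t : cantor), perfect p -> (D p <-> D (ttrans p t)))
  (Hcov : forall (I : Type) (f : I -> tree), card_lt I cantor ->
            (forall a, D (f a)) ->
            exists x, X x /\ forall a, ~ branch (f a) x) :
  exists Y : cantor -> Prop, s0 Y /\
    forall z : cantor, exists x y, X x /\ Y y /\ z = cadd x y.
Proof.
have [lt [wf [tot sm]]] := wo_exists.
have [d0 [_ [_ Dd0]]] : exists q, perfect q /\ tle q (fun _ => True) /\ D q.
  apply: Hdense; split=> //; split=> // s _; exists s; split=> //; exact: initseg_refl.
pose E := fun (z : cantor) => ((fun s => is_true (z (pickle s))) : tree).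
have surj : forall p : tree, exists z, E z = p.
  move=> p; exists (fun n => if unpickle n is Some s then `[< p s >] else false).
  apply: funext => s; rewrite /E pickleK; apply: propext; split => /asboolP //.
pose spec := fun z (prev : forall w, lt w z -> cantor * tree) (r : cantor * tree) =>
  X r.1 /\ D r.2 /\
  (forall w (h : lt w z), D (prev w h).2 -> ~ branch (ttrans (prev w h).2 z) r.1) /\
  (perfect (E z) -> tle r.2 (E z) /\
     (forall w (h : lt w z), ~ branch r.2 (cadd (prev w h).1 w)) /\
     ~ branch r.2 (cadd r.1 z)).
have ex : forall z prev, exists r, spec z prev r.
  move=> z prev.
  pose f := fun a : {w | lt w z} =>
    let q := (prev (proj1_sig a) (proj2_sig a)).2 in
    if pselect (D q) then ttrans q z else ttrans d0 z.
  have hcl : card_lt {w | lt w z} cantor.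
    split; first by exists (@proj1_sig _ _) => a b; apply: val_inj.
    move=> [g' gi']; apply: (sm z); exists (fun c => proj1_sig (g' c)); split.
      by move=> c1 c2 /val_inj /gi'.
    by move=> c; exact: proj2_sig (g' c).
  have hDf : forall a, D (f a).
    move=> a; rewrite /f; case: pselect => h.
      by apply/(Hinv _ _ (HDS _ h)).
    by apply/(Hinv _ _ (HDS _ Dd0)).
  have [x [hX hx]] := Hcov _ f hcl hDf.
  have h3 : forall w (h : lt w z), D (prev w h).2 -> ~ branch (ttrans (prev w h).2 z) x.
    move=> w h hD; have := hx (exist _ w h); rewrite /f /=.
    by case: pselect.
  pose A := fun y' => exists w (h : lt w z), y' = cadd (prev w h).1 w.
  have smA : Small A.
    move=> [g [gi gA]]; apply: (sm z).
    have H : forall c, exists w, exists h : lt w z, g c = cadd (prev w h).1 w by [].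
    pose wc := fun c => proj1_sig (cid (H c)).
    have hw : forall c, exists h : lt (wc c) z, g c = cadd (prev (wc c) h).1 (wc c).
      by move=> c; exact: proj2_sig (cid (H c)).
    exists wc; split; last by move=> c; have [h _] := hw c.
    move=> c1 c2 e; apply: gi.
    have [h1 e1] := hw c1; have [h2 e2] := hw c2.
    rewrite e1 e2; clear e1 e2; move: h1 h2; rewrite e => h1 h2; by rewrite (bool_irrelevance h1 h2).
  case: (pselect (perfect (E z))) => pz; last first.
    exists (x, d0); split=> //; split=> //; split=> //.
  have [q1 [pq1 [lq1 aq1]]] := avoid_small pz smA.
  have [q2 [pq2 [lq2 aq2]]] := avoid_small pq1 (small_single (y:=cadd x z)).
  have [q [pq [lq Dq]]] := Hdense q2 pq2.
  exists (x, q); split=> //; split=> //; split=> //; split=> //.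
    by move=> s hs; apply: lq1; apply: lq2; apply: lq.
  split.
    move=> w h hb; apply: (aq1 _ (fun n => lq2 _ (lq _ (hb n)))).
    by exists w, h.
  by move=> hb; apply: (aq2 _ (fun n => lq _ (hb n))).
pose step := fun z prev => proj1_sig (cid (ex z prev)).
pose F := Fix wf (fun _ => (cantor * tree)%type) step.
have HF : forall z, spec z (fun w _ => F w) (F z).
  move=> z.
  have e : F z = step z (fun w _ => F w).
    apply: Fix_eq => z' f g hfg.
    have -> : f = g; last by [].
    apply: functional_extensionality_dep => w; apply: functional_extensionality_dep => h.
    exact: hfg.
  rewrite e; exact: proj2_sig (cid (ex z (fun w _ => F w))).
exists (fun y => exists w, y = cadd (F w).1 w); split; last first.
  move=> z; exists (F z).1, (cadd (F z).1 z); split; first by case: (HF z).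
  split; first by exists z.
  by apply: funext => n; rewrite /cadd; case: ((F z).1 n); case: (z n).
move=> p hp; have [z ez] := surj p; subst p.
have [_ [hD [_ h4]]] := HF z; have [hle [hlt hself]] := h4 hp.
exists (F z).2; split; first exact: HDS.
split=> // y hy [v ev]; subst y.
have [h|[h|h]] := tot v z.
- exact: hlt v h hy.
- by subst v; apply: hself.
- have [_ [_ [h3 _]]] := HF v.
  by apply: (h3 z h hD); apply: branch_trans.
Qed.
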